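(* Let $G$ be a finite group and $H$ a proper subgroup with $[G:H] \geq 3$. There is a one-to-one correspondence between simple rank $3$ $G$-invariant matroids whose ground $G$-set is $G/H$ and nontrivial equivalence relations $\sim$ on $G/H - \{\bar{1}\}$ satisfying: (1) if $\bar{a} \sim \bar{b}$ and $\bar{a} \neq \bar{b}$, then $\overline{a^{-1}} \sim \overline{a^{-1}b}$; (2) if $\bar{a} \sim \bar{b}$ and $h \in H$, then $\overline{ha} \sim \overline{hb}$.
   Context: $G/H$ is the set of left cosets with $G$ acting by left multiplication, and $\bar{a}$ denotes $aH$. A matroid on a $G$-set is $G$-invariant if $gB$ is a basis for every basis $B$ and $g \in G$. A matroid is simple if every circuit has at least three elements. An equivalence relation is nontrivial if it has at least two classes. *)

(* Defs.v *)
From mathcomp Require Import all_boot all_fingroup.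
Set Implicit Arguments. Unset Strict Implicit. Unset Printing Implicit Defensive.
Local Open Scope group_scope.

Section Matroid.
Variable T : finType.

Definition is_matroid_bases (E : {set T}) (Bs : {set {set T}}) : Prop :=
  [/\ Bs != set0,
      forall B, B \in Bs -> B \subset E &
      forall B1 B2, B1 \in Bs -> B2 \in Bs -> forall x, x \in B1 :\: B2 ->
        exists2 y, y \in B2 :\: B1 & (y |: (B1 :\ x)) \in Bs].

Definition m_indep (Bs : {set {set T}}) (I : {set T}) : Prop :=
  exists2 B, B \in Bs & I \subset B.

Definition m_circuit (E : {set T}) (Bs : {set {set T}}) (C : {set T}) : Prop :=
  [/\ C \subset E, ~ m_indep Bs C &
      forall D : {set T}, D \proper C -> m_indep Bs D].

Definition m_simple (E : {set T}) (Bs : {set {set T}}) : Prop :=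
  forall C, m_circuit E Bs C -> 3 <= #|C|.

Definition m_rank_is (Bs : {set {set T}}) (r : nat) : Prop :=
  forall B, B \in Bs -> #|B| = r.
End Matroid.

Section Cosets.
Variable gT : finGroupType.
Implicit Types G H : {group gT}.

(** ground G-set G/H: left cosets aH, with G acting by left multiplication *)
Definition ground G H : {set {set gT}} := lcosets H G.

Definition act_set (g : gT) (S : {set {set gT}}) : {set {set gT}} :=
  [set g *: C | C in S].

Definition G_invariant G (Bs : {set {set {set gT}}}) : Prop :=
  forall g B, g \in G -> B \in Bs -> act_set g B \in Bs.

Definition simple_rank3_invariant_matroid G H (Bs : {set {set {set gT}}}) : Prop :=
  [/\ is_matroid_bases (ground G H) Bs, m_rank_is Bs 3, m_simple (ground G H) Bs
    & G_invariant G Bs].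

Definition punctured G H : {set {set gT}} := ground G H :\ (H : {set gT}).

Definition equiv_on (D : {set {set gT}}) (R : {set {set gT} * {set gT}}) : Prop :=
  [/\ R \subset setX D D,
      forall x, x \in D -> (x, x) \in R,
      forall x y, (x, y) \in R -> (y, x) \in R &
      forall x y z, (x, y) \in R -> (y, z) \in R -> (x, z) \in R].

Definition nontrivial_equiv (D : {set {set gT}}) (R : {set {set gT} * {set gT}}) : Prop :=
  2 <= #|[set [set y in D | (x, y) \in R] | x in D]|.

Definition admissible_relation G H (R : {set {set gT} * {set gT}}) : Prop :=
  [/\ equiv_on (punctured G H) R,
      nontrivial_equiv (punctured G H) R,
      forall a b, a \in G -> b \in G ->
        (a *: H, b *: H) \in R -> a *: H != b *: H ->
        (a^-1 *: H, (a^-1 * b) *: H) \in R &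
      forall a b h, a \in G -> b \in G -> h \in H ->
        (a *: H, b *: H) \in R -> ((h * a) *: H, (h * b) *: H) \in R].
End Cosets.

(* Main.v *)
Require Import Defs.
From mathcomp Require Import all_boot all_fingroup.
Local Open Scope group_scope.

Set Implicit Arguments. Unset Strict Implicit. Unset Printing Implicit Defensive.

Lemma in3P (T : finType) (p x y z : T) :
  p \in [set x; y; z] -> [\/ p = x, p = y | p = z].
Proof. by rewrite !inE => /orP[/orP[]|] /eqP ->; [constructor 1|constructor 2|constructor 3]. Qed.

Lemma in3 (T : finType) (x y z : T) :
  [/\ x \in [set x; y; z], y \in [set x; y; z] & z \in [set x; y; z]].
Proof. by rewrite !inE !eqxx !orbT. Qed.

Lemma card3 (T : finType) (x y z : T) :
  x != y -> x != z -> y != z -> #|[set x; y; z]| = 3.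
Proof.
move=> xy xz yz.
have -> : [set x; y; z] = x |: (y |: [set z]).
  by apply/setP=> t; rewrite !inE orbA.
by rewrite !cardsU1 cards1 !inE negb_or xy xz yz.
Qed.

Lemma dec3 (T : finType) (S : {set T}) x : #|S| = 3 -> x \in S ->
  exists y z, [/\ y != z, y != x, z != x & S = [set x; y; z]].
Proof.
move=> cS xS.
have : #|S :\ x| == 2 by move: (cardsD1 x S); rewrite xS cS add1n => -[<-].
case/cards2P=> y [z [yz Sxe]].
have yS : y \in S :\ x by rewrite Sxe !inE eqxx.
have zS : z \in S :\ x by rewrite Sxe !inE eqxx orbT.
move: yS zS; rewrite !inE => /andP[yx _] /andP[zx _].
exists y, z; split => //.
by rewrite -(setD1K xS) Sxe; apply/setP=> t; rewrite !inE orbA.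
Qed.

Lemma set3A (T : finType) (x y z : T) : [set x; y; z] = [set y; x; z].
Proof. by apply/setP=> t; rewrite !inE (orbC (t == x)). Qed.

Lemma set3B (T : finType) (x y z : T) : [set x; y; z] = [set x; z; y].
Proof. by apply/setP=> t; rewrite !inE -!orbA (orbC (t == y)). Qed.

Lemma act_set3 (gT : finGroupType) (g : gT) x y z :
  act_set g [set x; y; z] = [set g *: x; g *: y; g *: z].
Proof. by rewrite /act_set !imsetU !imset_set1. Qed.

Lemma act_setK (gT : finGroupType) (g : gT) S : act_set g^-1 (act_set g S) = S.
Proof.
rewrite /act_set -imset_comp.
rewrite (eq_imset _ (g := id)) ?imset_id // => C /=; exact: lcosetK.
Qed.

Lemma act_setKV (gT : finGroupType) (g : gT) S : act_set g (act_set g^-1 S) = S.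
Proof. by rewrite -{1}(invgK g) act_setK. Qed.

Lemma inXP (gT : finGroupType) (G H : {group gT}) x :
  reflect (exists2 g, g \in G & x = g *: H) (x \in ground G H).
Proof. exact: lcosetsP. Qed.

Lemma HinX (gT : finGroupType) (G H : {group gT}) : (H : {set gT}) \in ground G H.
Proof. by apply/inXP; exists 1; rewrite ?group1 ?lcoset1. Qed.

Lemma act_inX (gT : finGroupType) (G H : {group gT}) g x :
  g \in G -> x \in ground G H -> g *: x \in ground G H.
Proof.
move=> gG /inXP[k kG ->]; apply/inXP; exists (g * k); rewrite ?groupM //.
by rewrite lcosetM.
Qed.

Definition colb (gT : finGroupType) (G H : {group gT}) (R : {set {set gT} * {set gT}})
  (x y z : {set gT}) : bool :=
  [forall g in G, (x == g *: H) ==> ((g^-1 *: y, g^-1 *: z) \in R)].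

Lemma Rin (gT : finGroupType) (G H : {group gT}) R a b :
  admissible_relation G H R -> (a, b) \in R ->
  [/\ a != H, a \in ground G H, b != H & b \in ground G H].
Proof.
move=> [[Rsub _ _ _] _ _ _] ab; have := subsetP Rsub _ ab.
by rewrite /punctured in_setX !in_setD1 => /andP[/andP[-> ->] /andP[-> ->]].
Qed.

Lemma Tr_rep (gT : finGroupType) (G H : {group gT}) R g k y z :
  admissible_relation G H R -> g \in G -> k \in G -> g *: H = k *: H ->
  (g^-1 *: y, g^-1 *: z) \in R -> (k^-1 *: y, k^-1 *: z) \in R.
Proof.
move=> adm gG kG egk yz.
have /lcosetP[h hH ->] : k \in g *: H by rewrite egk lcoset_refl.
have [_ /inXP[c cG ec] _ /inXP[d dG ed]] := Rin adm yz.
case: adm => _ _ _ R2.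
rewrite invMg !lcosetM ec ed -!lcosetM.
apply: R2 => //; first by rewrite groupV.
by rewrite -ec -ed.
Qed.

Lemma colP (gT : finGroupType) (G H : {group gT}) R x y z g :
  colb G H R x y z -> g \in G -> x = g *: H -> (g^-1 *: y, g^-1 *: z) \in R.
Proof. by move=> /forall_inP/(_ g) + gG ex => /(_ gG); rewrite ex eqxx. Qed.

Lemma col_of (gT : finGroupType) (G H : {group gT}) R x y z g :
  admissible_relation G H R -> g \in G -> x = g *: H ->
  (g^-1 *: y, g^-1 *: z) \in R -> colb G H R x y z.
Proof.
move=> adm gG -> yz; apply/forall_inP => k kG; apply/implyP => /eqP e.
exact: Tr_rep adm gG kG e yz.
Qed.

Lemma col_swap23 (gT : finGroupType) (G H : {group gT}) R x y z :
  admissible_relation G H R -> colb G H R x y z -> colb G H R x z y.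
Proof.
move=> [[_ _ Rsym _] _ _ _] c; apply/forall_inP => g gG; apply/implyP => /eqP e.
exact/Rsym/(colP c gG e).
Qed.

Lemma col_swap12 (gT : finGroupType) (G H : {group gT}) R x y z :
  admissible_relation G H R -> x \in ground G H -> y \in ground G H ->
  z \in ground G H -> y != z ->
  colb G H R x y z -> colb G H R y x z.
Proof.
move=> adm /inXP[g gG ex] /inXP[c cG ey] /inXP[d dG ez] yz cl.
have t := colP cl gG ex.
move: t; rewrite ey ez -!lcosetM => t.
have := adm; case=> _ _ R1 _.
have ne : (g^-1 * c) *: H != (g^-1 * d) *: H.
  by rewrite !lcosetM; apply: contra yz => /eqP/lcoset_inj; rewrite ey ez => ->.
have := R1 _ _ (groupM (groupVr gG) cG) (groupM (groupVr gG) dG) t ne.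
rewrite invMg invgK mulgA -(mulgA c^-1) mulgV mulg1 => t2.
apply: (col_of adm cG erefl).
by rewrite ex -!lcosetM.
Qed.

Lemma col_trans (gT : finGroupType) (G H : {group gT}) R a b c d :
  admissible_relation G H R ->
  colb G H R a b c -> colb G H R a b d -> colb G H R a c d.
Proof.
move=> [[_ _ Rsym Rtr] _ _ _] c1 c2; apply/forall_inP => g gG; apply/implyP => /eqP e.
exact: Rtr (Rsym _ _ (colP c1 gG e)) (colP c2 gG e).
Qed.

Definition colS (gT : finGroupType) (G H : {group gT}) R (S : {set {set gT}}) :=
  forall x y z, x \in S -> y \in S -> z \in S -> x != y -> x != z -> y != z ->
  colb G H R x y z.

Lemma col_perm (gT : finGroupType) (G H : {group gT}) R x y z :
  admissible_relation G H R -> x \in ground G H -> y \in ground G H ->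
  z \in ground G H -> x != y -> x != z -> y != z ->
  colb G H R x y z -> colS G H R [set x; y; z].
Proof.
move=> adm xX yX zX xy xz yz f1.
have f2 := col_swap23 adm f1.
have f3 := col_swap12 adm xX yX zX yz f1.
have f4 := col_swap23 adm f3.
have f5 := col_swap12 adm xX zX yX (contra_neq esym yz) f2.
rewrite eq_sym in yz.
have f6 := col_swap23 adm f5.
by move=> p q r /in3P[]-> /in3P[]-> /in3P[]->; rewrite ?eqxx.
Qed.

Lemma in4P (T : finType) (p a b c d : T) :
  p \in [set a; b; c; d] -> [\/ p = a, p = b, p = c | p = d].
Proof.
by rewrite !inE => /orP[/orP[/orP[]|]|] /eqP ->;
  [constructor 1|constructor 2|constructor 3|constructor 4].
Qed.

Lemma col4 (gT : finGroupType) (G H : {group gT}) R a b c d :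
  admissible_relation G H R -> a \in ground G H -> b \in ground G H ->
  c \in ground G H -> d \in ground G H ->
  a != b -> a != c -> a != d -> b != c -> b != d -> c != d ->
  colb G H R a b c -> colb G H R a b d -> colS G H R [set a; b; c; d].
Proof.
move=> adm aX bX cX dX ab ac ad bc bd cd f1 f2.
have S1 := col_perm adm aX bX cX ab ac bc f1.
have S2 := col_perm adm aX bX dX ab ad bd f2.
have f3 := col_trans adm f1 f2.
have S3 := col_perm adm aX cX dX ac ad cd f3.
have ba : b != a by rewrite eq_sym.
have g1 : colb G H R b a c by apply: S1; rewrite ?inE ?eqxx ?orbT.
have g2 : colb G H R b a d by apply: S2; rewrite ?inE ?eqxx ?orbT.
have S4 := col_perm adm bX cX dX bc bd cd (col_trans adm g1 g2).
move=> p q r /in4P[]-> /in4P[]-> /in4P[]->; rewrite ?eqxx // => n1 n2 n3;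
  first [ by (apply: S1; rewrite ?inE ?eqxx ?orbT)
        | by (apply: S2; rewrite ?inE ?eqxx ?orbT)
        | by (apply: S3; rewrite ?inE ?eqxx ?orbT)
        | by (apply: S4; rewrite ?inE ?eqxx ?orbT) ].
Qed.

Lemma on3 (gT : finGroupType) (G H : {group gT}) R p q s :
  (s == p) || (s == q) || colb G H R p q s ->
  [\/ s = p, s = q | [/\ s != p, s != q & colb G H R p q s]].
Proof.
have [->|sp] := eqVneq s p; first by constructor 1.
have [->|sq] := eqVneq s q; first by constructor 2.
by move=> /= c; constructor 3.
Qed.

Ltac cl := solve [ assumption | by rewrite eq_sym | by rewrite !inE ?eqxx ?orbT ].

Lemma line3 (gT : finGroupType) (G H : {group gT}) R p q u v w :
  admissible_relation G H R -> p \in ground G H -> q \in ground G H ->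
  u \in ground G H -> v \in ground G H -> w \in ground G H -> p != q ->
  (u == p) || (u == q) || colb G H R p q u ->
  (v == p) || (v == q) || colb G H R p q v ->
  (w == p) || (w == q) || colb G H R p q w ->
  u != v -> u != w -> v != w -> colb G H R u v w.
Proof.
move=> adm pX qX uX vX wX pq.
case/on3=> [->|->|[up uq cu]]; case/on3=> [->|->|[vp vq cv]];
  case/on3=> [->|->|[wp wq cw]]; rewrite ?eqxx // => n1 n2 n3;
first
 [ match goal with c : is_true (colb _ _ _ p q ?s) |- _ =>
     by apply: (col_perm adm pX qX (_ : s \in ground G H) pq _ _ c); cl end
 | match goal with c : is_true (colb _ _ _ p q ?s) |- _ =>
     by apply: (col_perm adm qX pX (_ : s \in ground G H) (_ : q != p) _ _
                  (col_swap12 adm pX qX (_ : s \in ground G H) _ c)); cl end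
 | match goal with c1 : is_true (colb _ _ _ p q ?s),
                   c2 : is_true (colb _ _ _ p q ?t) |- _ =>
     by apply: (col4 adm pX qX (_ : s \in ground G H) (_ : t \in ground G H)
                  pq _ _ _ _ _ c1 c2); cl end
 | idtac ].
have e1 : colb G H R p u v.
  by apply: (col4 adm pX qX uX vX pq _ _ _ _ n1 cu cv); cl.
have e2 : colb G H R p u w.
  by apply: (col4 adm pX qX uX wX pq _ _ _ _ n2 cu cw); cl.
by apply: (col4 adm pX uX vX wX _ _ _ n1 n2 n3 e1 e2); cl.
Qed.

Definition MatR (gT : finGroupType) (G H : {group gT}) R : {set {set {set gT}}} :=
  [set S : {set {set gT}} | (S \subset ground G H) && (#|S| == 3) &&
     [forall x in S, forall y in S, forall z in S,
        [&& x != y, x != z & y != z] ==> ~~ colb G H R x y z]].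

Lemma MatR3P (gT : finGroupType) (G H : {group gT}) R x y z :
  admissible_relation G H R -> x \in ground G H -> y \in ground G H ->
  z \in ground G H -> x != y -> x != z -> y != z ->
  ([set x; y; z] \in MatR G H R) = ~~ colb G H R x y z.
Proof.
move=> adm xX yX zX xy xz yz; have [ix iy iz] := in3 x y z.
rewrite inE; apply/idP/idP.
  case/andP=> _ /forall_inP/(_ x ix)/forall_inP/(_ y iy)/forall_inP/(_ z iz).
  by rewrite xy xz yz.
move=> nc; rewrite card3 // eqxx andbT.
apply/andP; split; first by apply/subsetP=> t /in3P[]->.
apply/forall_inP => a aS; apply/forall_inP => b bS; apply/forall_inP => c cS.
apply/implyP => /and3P[ab ac bc]; apply: contra nc => cabc.
have inX : forall t, t \in [set x; y; z] -> t \in ground G H by move=> t /in3P[]->.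
have S := col_perm adm (inX _ aS) (inX _ bS) (inX _ cS) ab ac bc cabc.
have e : [set a; b; c] = [set x; y; z].
  apply/eqP; rewrite eqEcard card3 // card3 // leqnn andbT.
  by apply/subsetP=> t /in3P[]->.
by apply: S; rewrite ?e.
Qed.

Lemma MatR_dec (gT : finGroupType) (G H : {group gT}) R S x :
  S \in MatR G H R -> x \in S ->
  exists y z, [/\ x != y, x != z, y != z & S = [set x; y; z]] /\
    [/\ x \in ground G H, y \in ground G H, z \in ground G H & ~~ colb G H R x y z].
Proof.
rewrite inE => /andP[/andP[sX /eqP cS] /forall_inP fa] xS.
have [y [z [yz yx zx eS]]] := dec3 cS xS.
have [ix iy iz] := in3 x y z.
exists y, z; split; first by split; rewrite // eq_sym.
rewrite -eS in ix iy iz; split; try exact: (subsetP sX).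
move: (fa x ix) => /forall_inP/(_ y iy)/forall_inP/(_ z iz).
by rewrite eq_sym yx eq_sym zx yz.
Qed.

Lemma MatR_elem (gT : finGroupType) (G H : {group gT}) R S :
  S \in MatR G H R -> exists x, x \in S.
Proof.
rewrite inE => /andP[/andP[_ /eqP cS] _]; apply/set0Pn.
by rewrite -card_gt0 cS.
Qed.

Lemma MatR_ne (gT : finGroupType) (G H : {group gT}) R :
  admissible_relation G H R -> exists B, B \in MatR G H R.
Proof.
move=> adm; have [[Rsub Rrefl Rsym Rtr] Rnt _ _] := adm.
case/card_gt1P: Rnt => K1 [K2 [/imsetP[a aD ->] /imsetP[b bD ->] neK]].
have nab : (a, b) \notin R.
  apply: contra neK => ab; apply/eqP/setP=> t; rewrite !inE.
  apply/andP/andP => -[tD ht]; split => //.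
    exact: Rtr (Rsym _ _ ab) ht.
  exact: Rtr ab ht.
have ab : a != b by apply: contraNneq nab => ->; exact: Rrefl.
move: aD bD; rewrite /punctured !in_setD1 => /andP[aH aX] /andP[bH bX].
exists [set (H : {set gT}); a; b].
rewrite MatR3P ?HinX // 1?eq_sym //; apply: contra nab => c.
by have := colP c (group1 G) (esym (lcoset1 H)); rewrite invg1 !lcoset1.
Qed.

Lemma MatR_exch (gT : finGroupType) (G H : {group gT}) R B1 B2 x :
  admissible_relation G H R -> B1 \in MatR G H R -> B2 \in MatR G H R ->
  x \in B1 :\: B2 ->
  exists2 y, y \in B2 :\: B1 & (y |: (B1 :\ x)) \in MatR G H R.
Proof.
move=> adm M1 M2; rewrite inE => /andP[xnB2 xB1].
have [p [q [[xp xq pq eB1] [xX pX qX ncol]]]] := MatR_dec M1 xB1.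
have e1 : B1 :\ x = [set p; q].
  apply/setP=> t; rewrite eB1 !inE.
  have [->|tx] /= := eqVneq t x; first by rewrite (negbTE xp) (negbTE xq).
  done.
rewrite e1.
case: (boolP [exists y in B2 :\: B1, [set y; p; q] \in MatR G H R]).
  case/exists_inP=> y yin ym; exists y => //.
  suff -> : y |: [set p; q] = [set y; p; q] by [].
  by apply/setP=> t; rewrite !inE orbA.
move/exists_inPn => nall.
have [u uB2] := MatR_elem M2.
have [v [w [[uv uw vw eB2] [uX vX wX ncB2]]]] := MatR_dec M2 uB2.
have on : forall s, s \in B2 -> (s == p) || (s == q) || colb G H R p q s.
  move=> s sB2.
  have [//|sp] := eqVneq s p; have [//|sq] := eqVneq s q; rewrite /=.
  have sX : s \in ground G H by rewrite eB2 in sB2; case/in3P: sB2 => ->.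
  have snB1 : s \notin B1.
    rewrite eB1 !inE (negbTE sp) (negbTE sq) !orbF.
    by apply: (contraNneq _ xnB2) => <-.
  have := nall s; rewrite inE snB1 sB2 => /(_ isT).
  rewrite MatR3P // 1?eq_sym // negbK => c.
  have S := col_perm adm sX pX qX sp sq pq c.
  by apply: S; rewrite ?inE ?eqxx ?orbT // eq_sym.
have [iu iv iw] := in3 u v w; rewrite -eB2 in iu iv iw.
have := line3 adm pX qX uX vX wX pq (on _ iu) (on _ iv) (on _ iw) uv uw vw.
by rewrite (negbTE ncB2).
Qed.

Lemma pair_in2 (gT : finGroupType) (G H : {group gT}) R a b :
  admissible_relation G H R -> a \in ground G H -> b \in ground G H -> a != b ->
  exists2 B, B \in MatR G H R & (a \in B) && (b \in B).
Proof.
move=> adm aX bX ab.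
case: (boolP [exists c in ground G H,
                (c != a) && (c != b) && ([set a; b; c] \in MatR G H R)]).
  case/exists_inP=> c cX /andP[_ cm]; exists [set a; b; c] => //.
  by rewrite !inE !eqxx ?orbT.
move/exists_inPn => nall.
have [B0 M0] := MatR_ne adm.
have [u uB] := MatR_elem M0.
have [v [w [[uv uw vw eB] [uX vX wX ncB]]]] := MatR_dec M0 uB.
have on : forall s, s \in ground G H -> (s == a) || (s == b) || colb G H R a b s.
  move=> s sX.
  have [//|sa] := eqVneq s a; have [//|sb] := eqVneq s b; rewrite /=.
  have := nall s sX; rewrite sa sb /= MatR3P // 1?eq_sym // negbK.
  by [].
have [iu iv iw] := in3 u v w.
have := line3 adm aX bX uX vX wX ab (on _ uX) (on _ vX) (on _ wX) uv uw vw.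
by rewrite (negbTE ncB).
Qed.

Lemma pair_in (gT : finGroupType) (G H : {group gT}) R a b :
  admissible_relation G H R -> a \in ground G H -> b \in ground G H ->
  exists2 B, B \in MatR G H R & (a \in B) && (b \in B).
Proof.
move=> adm aX bX.
have [->|ab] := eqVneq a b; last exact: pair_in2.
have [B0 M0] := MatR_ne adm.
have [u uB] := MatR_elem M0.
have [v [w [[uv uw vw eB] [uX vX wX ncB]]]] := MatR_dec M0 uB.
have [ub|ub] := eqVneq u b; first by exists B0; rewrite // -ub uB.
have [B MB /andP[bB _]] := pair_in2 adm bX uX (contra_neq esym ub).
by exists B; rewrite ?bB.
Qed.

Lemma MatR_simple (gT : finGroupType) (G H : {group gT}) R :
  admissible_relation G H R -> m_simple (ground G H) (MatR G H R).
Proof.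
move=> adm C [CX nind _]; rewrite leqNgt; apply/negP => small; apply: nind.
have [B0 M0] := MatR_ne adm.
have indab : forall a b, a \in ground G H -> b \in ground G H ->
    C \subset [set a; b] -> m_indep (MatR G H R) C.
  move=> a b aX bX sC; have [B MB /andP[aB bB]] := pair_in adm aX bX.
  exists B => //; apply: subset_trans sC _; apply/subsetP => t /set2P[]->//.
move: small; case Ec: #|C| => [|[|[|n]]] // _.
- by rewrite (cards0_eq Ec); exists B0; rewrite ?sub0set.
- have /cards1P[a eC] : #|C| == 1%N by rewrite Ec.
  have aX : a \in ground G H by apply: (subsetP CX); rewrite eC set11.
  by apply: (indab a a aX aX); rewrite eC; apply/subsetP=> t /set1P->; rewrite !inE eqxx.
- have /cards2P[a [b [ab eC]]] : #|C| == 2%N by rewrite Ec.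
  have aX : a \in ground G H by apply: (subsetP CX); rewrite eC !inE eqxx.
  have bX : b \in ground G H by apply: (subsetP CX); rewrite eC !inE eqxx orbT.
  by apply: (indab a b aX bX); rewrite eC.
Qed.

Lemma MatR_inv (gT : finGroupType) (G H : {group gT}) R :
  admissible_relation G H R -> G_invariant G (MatR G H R).
Proof.
move=> adm g B gG MB.
have [x xB] := MatR_elem MB.
have [y [z [[xy xz yz eB] [xX yX zX ncB]]]] := MatR_dec MB xB.
have ne : forall s t : {set gT}, s != t -> g *: s != g *: t.
  by move=> s t; apply: contra => /eqP/lcoset_inj ->.
have gx := act_inX gG xX; have gy := act_inX gG yX; have gz := act_inX gG zX.
rewrite eB act_set3 MatR3P ?ne //.
apply: contra ncB => c.
have /inXP[k kG ex] := xX.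
apply: (col_of adm kG ex).
have e : g *: x = (g * k) *: H by rewrite ex lcosetM.
have := colP c (groupM gG kG) e.
by rewrite -!lcosetM invMg -mulgA mulVg mulg1.
Qed.

Lemma MatR_valid (gT : finGroupType) (G H : {group gT}) R :
  admissible_relation G H R -> simple_rank3_invariant_matroid G H (MatR G H R).
Proof.
move=> adm; split; last exact: MatR_inv adm; last exact: MatR_simple adm.
- split.
  + by have [B MB] := MatR_ne adm; apply/set0Pn; exists B.
  + by move=> B; rewrite inE => /andP[/andP[]].
  + by move=> B1 B2 M1 M2 x xin; exact: MatR_exch adm M1 M2 xin.
- by move=> B; rewrite inE => /andP[/andP[_ /eqP]].
Qed.

Definition fR (gT : finGroupType) (G H : {group gT}) (Bs : {set {set {set gT}}})
  : {set {set gT} * {set gT}} :=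
  [set p in setX (punctured G H) (punctured G H) |
     (p.1 == p.2) || ([set (H : {set gT}); p.1; p.2] \notin Bs)].

Lemma fR_MatR (gT : finGroupType) (G H : {group gT}) R :
  admissible_relation G H R -> fR G H (MatR G H R) = R.
Proof.
move=> adm; have [[_ Rrefl _ _] _ _ _] := adm.
apply/setP=> -[a b]; rewrite inE /=; apply/idP/idP.
  case/andP=> abD; move: (abD); rewrite /punctured in_setX !in_setD1.
  case/andP=> /andP[aH aX] /andP[bH bX].
  have [-> _|ab /=] := eqVneq a b.
    by apply: Rrefl; move: abD; rewrite in_setX => /andP[].
  rewrite MatR3P ?HinX // 1?eq_sym // negbK => c.
  by have := colP c (group1 G) (esym (lcoset1 H)); rewrite invg1 !lcoset1.
move=> abR; have [aH aX bH bX] := Rin adm abR.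
rewrite /punctured in_setX !in_setD1 aH aX bH bX /=.
have [//|ab /=] := eqVneq a b.
rewrite MatR3P ?HinX // 1?eq_sym // negbK.
by apply: (col_of adm (group1 G) (esym (lcoset1 H))); rewrite invg1 !lcoset1.
Qed.

Lemma indep_sub (T : finType) (Bs : {set {set T}}) (I J : {set T}) :
  I \subset J -> m_indep Bs J -> m_indep Bs I.
Proof. by move=> sIJ [B BB sJB]; exists B => //; apply: subset_trans sJB. Qed.

Lemma indepP (T : finType) (Bs : {set {set T}}) (I : {set T}) :
  reflect (m_indep Bs I) [exists B in Bs, I \subset B].
Proof. exact: exists_inP. Qed.

Lemma single_indep (T : finType) (E : {set T}) (Bs : {set {set T}}) a :
  is_matroid_bases E Bs -> m_simple E Bs -> a \in E -> m_indep Bs [set a].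
Proof.
move=> [Hne _ _] Hs aE.
case: (boolP [exists B in Bs, [set a] \subset B]) => [/indepP //|/indepP ni].
have : 3 <= #|[set a]|; last by rewrite cards1.
apply: (Hs); split; first by rewrite sub1set.
  exact: ni.
move=> D; rewrite properEneq => /andP[nD]; rewrite subset1 (negbTE nD) /= => /eqP->.
by have /set0Pn[B BB] := Hne; exists B; rewrite ?sub0set.
Qed.

Lemma pair_indep (T : finType) (E : {set T}) (Bs : {set {set T}}) a b :
  is_matroid_bases E Bs -> m_simple E Bs -> a \in E -> b \in E ->
  m_indep Bs [set a; b].
Proof.
move=> Hb Hs aE bE.
case: (boolP [exists B in Bs, [set a; b] \subset B]) => [/indepP //|/indepP ni].
have : 3 <= #|[set a; b]|; last by rewrite cards2; case: (a != b).
apply: (Hs); split; first by apply/subsetP=> t /set2P[]->.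
  exact: ni.
move=> D; rewrite properEneq => /andP[nD sD].
case: (boolP (a \in D)) => aD; case: (boolP (b \in D)) => bD.
- by case/negP: nD; rewrite eqEsubset sD; apply/subsetP=> t /set2P[]->.
- apply: (indep_sub _ (single_indep Hb Hs aE)); apply/subsetP=> t tD.
  have := subsetP sD t tD; case/set2P=> e; subst t; first by rewrite inE.
  by rewrite tD in bD.
- apply: (indep_sub _ (single_indep Hb Hs bE)); apply/subsetP=> t tD.
  have := subsetP sD t tD; case/set2P=> e; subst t; last by rewrite inE.
  by rewrite tD in aD.
- apply: (indep_sub _ (single_indep Hb Hs aE)); apply/subsetP=> t tD.
  have := subsetP sD t tD; case/set2P=> e; subst t.
    by rewrite tD in aD.
  by rewrite tD in bD.
Qed.

Lemma indep3 (T : finType) (Bs : {set {set T}}) (S : {set T}) :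
  m_rank_is Bs 3 -> #|S| = 3 -> m_indep Bs S -> S \in Bs.
Proof.
move=> Hr cS [B BB sSB].
suff -> : S = B by [].
by apply/eqP; rewrite eqEcard sSB /= (Hr B BB) cS.
Qed.

Lemma act_in (gT : finGroupType) (G : {group gT}) Bs g S :
  G_invariant G Bs -> g \in G -> (act_set g S \in Bs) = (S \in Bs).
Proof.
move=> Hi gG; apply/idP/idP; last exact: Hi.
by move/(Hi g^-1 _ (groupVr gG)); rewrite act_setK.
Qed.

Lemma fRE (gT : finGroupType) (G H : {group gT}) Bs a b :
  ((a, b) \in fR G H Bs) = [&& a \in punctured G H, b \in punctured G H &
     (a == b) || ([set (H : {set gT}); a; b] \notin Bs)].
Proof. by rewrite /fR inE in_setX andbA. Qed.

Lemma inD (gT : finGroupType) (G H : {group gT}) x :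
  (x \in punctured G H) = (x != H) && (x \in ground G H).
Proof. by rewrite /punctured in_setD1. Qed.

Lemma fR_trans (gT : finGroupType) (G H : {group gT}) Bs x y z :
  simple_rank3_invariant_matroid G H Bs ->
  (x, y) \in fR G H Bs -> (y, z) \in fR G H Bs -> (x, z) \in fR G H Bs.
Proof.
move=> [Hb Hr Hs Hi].
rewrite !fRE => /and3P[xD yD /orP[/eqP->|nb1]]; first by [].
move=> /and3P[_ zD /orP[/eqP<-|nb2]]; first by rewrite xD yD nb1 orbT.
rewrite xD zD /=; have [//|xz /=] := eqVneq x z.
apply/negP => B1in.
move: (xD) (yD) (zD); rewrite !inD => /andP[xH xX] /andP[yH yX] /andP[zH zX].
have [B2 B2in sB2] := pair_indep Hb Hs (HinX G H) yX.
have HB2 : (H : {set gT}) \in B2 by apply: (subsetP sB2); rewrite !inE eqxx.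
have yB2 : y \in B2 by apply: (subsetP sB2); rewrite !inE eqxx orbT.
have [c [d [cd cH dH eB2]]] := dec3 (Hr _ B2in) HB2.
have [e [eH ey eB2']] : exists e : {set gT}, [/\ e != H, e != y & B2 = [set (H : {set gT}); y; e]].
  move: yB2; rewrite eB2 => /in3P[yeq|yeq|yeq].
  - by move: yH; rewrite yeq eqxx.
  - rewrite yeq; exists d; split; [exact: dH | by rewrite eq_sym | reflexivity].
  - rewrite yeq; exists c; split; [exact: cH | exact: cd | exact: set3B].
have ex : e != x.
  apply: contraNneq nb1 => exe; rewrite -exe set3B -eB2' B2in //.
have ez : e != z.
  apply: contraNneq nb2 => eze; rewrite -eze -eB2' B2in //.
have [b1 _ Hex] := Hb.
have ein : e \in B2 :\: [set (H : {set gT}); x; z].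
  by rewrite inE eB2' !inE eqxx orbT (negbTE eH) (negbTE ex) (negbTE ez).
have [w win wB] := Hex _ _ B2in B1in e ein.
have eB2e : B2 :\ e = [set (H : {set gT}); y].
  apply/setP=> t; rewrite eB2' !inE.
  have [->|te] /= := eqVneq t e; last by rewrite orbF.
  by rewrite (negbTE eH) (negbTE ey).
move: win wB; rewrite eB2e inE eB2' !inE negb_or negb_or => /andP[/andP[/andP[wH _] _]].
case/orP=> [/orP[/eqP wH'|/eqP ->]|/eqP ->]; first by rewrite wH' eqxx in wH.
  have -> : x |: [set (H : {set gT}); y] = [set (H : {set gT}); x; y].
    by apply/setP=> t; rewrite !inE; case: (t == x); case: (t == gval H); case: (t == y).
  by rewrite (negbTE nb1).
have -> : z |: [set (H : {set gT}); y] = [set (H : {set gT}); y; z].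
  by apply/setP=> t; rewrite !inE; case: (t == z); case: (t == gval H); case: (t == y).
by rewrite (negbTE nb2).
Qed.

Lemma fR_act (gT : finGroupType) (G H : {group gT}) Bs g x y :
  simple_rank3_invariant_matroid G H Bs -> g \in G -> g *: (H : {set gT}) = H ->
  (x, y) \in fR G H Bs -> (g *: x, g *: y) \in fR G H Bs.
Proof.
move=> [Hb Hr Hs Hi] gG gH; rewrite !fRE => /and3P[xD yD o].
have gHi : g^-1 *: (H : {set gT}) = H by rewrite -{1}gH lcosetK.
have nH : forall t : {set gT}, t != H -> g *: t != H.
  by move=> t; apply: contra => /eqP e; rewrite -(lcosetK g t) e gHi.
move: xD yD; rewrite !inD => /andP[xH xX] /andP[yH yX].
rewrite !nH // !act_inX //=.
have -> : (g *: x == g *: y) = (x == y).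
  by apply/eqP/eqP => [/lcoset_inj|->].
have -> : [set (H : {set gT}); g *: x; g *: y] = act_set g [set (H : {set gT}); x; y].
  by rewrite act_set3 gH.
by rewrite (act_in _ Hi).
Qed.

Lemma fR_adm (gT : finGroupType) (G H : {group gT}) Bs :
  H \subset G -> simple_rank3_invariant_matroid G H Bs ->
  admissible_relation G H (fR G H Bs).
Proof.
move=> sHG val; have [Hb Hr Hs Hi] := val.
have Hrefl : forall x, x \in punctured G H -> (x, x) \in fR G H Bs.
  by move=> x xD; rewrite fRE xD eqxx.
split.
- split => //.
  + by apply/subsetP=> -[a b]; rewrite fRE in_setX => /and3P[-> -> _].
  + by move=> a b; rewrite !fRE => /and3P[aD bD o]; rewrite bD aD eq_sym set3B.
  + by move=> a b c; apply: fR_trans.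
- have [Hne _ _] := Hb.
  have /set0Pn[B BB] := Hne.
  have [x xB] : exists x, x \in B.
    by apply/set0Pn; rewrite -card_gt0 (Hr B BB).
  have [y [z [yz yx zx eB]]] := dec3 (Hr B BB) xB.
  have [_ BX _] := Hb.
  have [ix iy iz] := in3 x y z; rewrite -eB in ix iy iz.
  have /inXP[g gG ex] := subsetP (BX B BB) x ix.
  have yX := subsetP (BX B BB) y iy; have zX := subsetP (BX B BB) z iz.
  set a := g^-1 *: y; set b := g^-1 *: z.
  have gV := groupVr gG.
  have aD : a \in punctured G H.
    rewrite inD act_inX // andbT; apply: contra yx => /eqP e.
    by rewrite ex -e lcosetKV.
  have bD : b \in punctured G H.
    rewrite inD act_inX // andbT; apply: contra zx => /eqP e.
    by rewrite ex -e lcosetKV.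
  have nab : (a, b) \notin fR G H Bs.
    rewrite fRE aD bD /= negb_or negbK; apply/andP; split.
      by apply: contra yz => /eqP/lcoset_inj ->.
    have -> : [set (H : {set gT}); a; b] = act_set g^-1 B.
      by rewrite eB act_set3 ex lcosetK.
    by rewrite (act_in _ Hi).
  apply/card_gt1P.
  exists [set t in punctured G H | (a, t) \in fR G H Bs],
         [set t in punctured G H | (b, t) \in fR G H Bs].
  split; try by apply: imset_f.
  apply/negP => /eqP e.
  have : b \in [set t in punctured G H | (b, t) \in fR G H Bs].
    by rewrite inE bD Hrefl.
  by rewrite -e inE (negbTE nab) andbF.
- move=> a b aG bG abR ne.
  move: abR; rewrite lcosetM !fRE (negbTE ne) /= => /andP[xD /andP[yD nb]].
  have gV := groupVr aG.
  move: (xD) (yD); rewrite !inD => /andP[xH xX] /andP[yH yX].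
  rewrite !act_inX ?HinX // !andbT /=.
  apply/and3P; split.
  + by apply: contra xH => /eqP e; rewrite -{1}e lcosetKV; apply/eqP.
  + by apply: contra ne => /eqP e; rewrite -[b *: H](lcosetKV a) e; apply/eqP.
  + apply/orP; right.
    have -> : [set (H : {set gT}); a^-1 *: H; a^-1 *: (b *: H)] =
              act_set a^-1 [set a *: H; (H : {set gT}); b *: H].
      by rewrite act_set3 lcosetK.
    by rewrite (act_in _ Hi) // set3A.
- move=> a b h aG bG hH abR; rewrite !lcosetM.
  by apply: fR_act => //; [exact: (subsetP sHG) | exact: lcoset_id].
Qed.

Lemma BsMat (gT : finGroupType) (G H : {group gT}) Bs :
  H \subset G -> simple_rank3_invariant_matroid G H Bs ->
  MatR G H (fR G H Bs) = Bs.
Proof.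
move=> sHG val; have adm := fR_adm sHG val; have [Hb Hr Hs Hi] := val.
apply/setP=> S; apply/idP/idP => [MS|SB].
  have [x xS] := MatR_elem MS.
  have [y [z [[xy xz yz eS] [xX yX zX nc]]]] := MatR_dec MS xS.
  case: (boolP (S \in Bs)) => // nS; exfalso; move/negP: nc; apply.
  have /inXP[g gG ex] := xX; have gV := groupVr gG.
  apply: (col_of adm gG ex); rewrite fRE !inD !act_inX // !andbT.
  apply/and3P; split.
  - by apply: contra xy => /eqP e; rewrite ex -[y](lcosetKV g) e; apply/eqP.
  - by apply: contra xz => /eqP e; rewrite ex -[z](lcosetKV g) e; apply/eqP.
  - apply/orP; right.
    have -> : [set (H : {set gT}); g^-1 *: y; g^-1 *: z] = act_set g^-1 S.
      by rewrite eS act_set3 ex lcosetK.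
    by rewrite (act_in _ Hi).
have [x xS] : exists x, x \in S by apply/set0Pn; rewrite -card_gt0 (Hr S SB).
have [y [z [yz yx zx eS]]] := dec3 (Hr S SB) xS.
have [_ BX _] := Hb.
have [ix iy iz] := in3 x y z; rewrite -eS in ix iy iz.
have xX := subsetP (BX S SB) x ix.
have yX := subsetP (BX S SB) y iy; have zX := subsetP (BX S SB) z iz.
rewrite eS MatR3P // 1?eq_sym //.
apply/negP => c.
have /inXP[g gG ex] := xX; have gV := groupVr gG.
have := colP c gG ex; rewrite fRE => /and3P[_ _ /orP[/eqP/lcoset_inj e|]].
  by rewrite e eqxx in yz.
have -> : [set (H : {set gT}); g^-1 *: y; g^-1 *: z] = act_set g^-1 S.
  by rewrite eS act_set3 ex lcosetK.
by rewrite (act_in _ Hi) // SB.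
Qed.

Unset Implicit Arguments.

Theorem proposition3p9 (gT : finGroupType) (G H : {group gT}) :
  H \proper G -> 3 <= #|G : H| ->
  exists f : {set {set {set gT}}} -> {set {set gT} * {set gT}},
    (forall Bs, simple_rank3_invariant_matroid G H Bs ->
       admissible_relation G H (f Bs)) /\
    (forall Bs1 Bs2, simple_rank3_invariant_matroid G H Bs1 ->
       simple_rank3_invariant_matroid G H Bs2 -> f Bs1 = f Bs2 -> Bs1 = Bs2) /\
    (forall R, admissible_relation G H R ->
       exists2 Bs, simple_rank3_invariant_matroid G H Bs & f Bs = R).
Proof.
move=> pHG _; have sHG := proper_sub pHG.
exists (fun Bs => fR G H Bs); split; [|split].
- by move=> Bs v; exact: fR_adm sHG v.
- by move=> B1 B2 v1 v2 e; rewrite -(BsMat sHG v1) -(BsMat sHG v2) e.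
- move=> R adm; exists (MatR G H R); [exact: MatR_valid | exact: fR_MatR].
Qed.
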